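(* Let $N$ be a non-negative integer and let $c_0,c_1,c_2,c_3,c_4$ be parameters satisfying $c_0+c_1+c_2+c_3+c_4=-2N-3$. For non-negative integers $i,j,k,\ell$ with $i+j\le N$ and $k+\ell\le N$, the Tratnik polynomials of Racah type satisfy \[ \sum_{\substack{x,y\in\mathbb{Z}_{\ge 0}\\ x+y\le N}} \Lambda(x;c_1,c_2;N)\,\Omega(y;c_4,c_0,c_3;N-x)\,T_{i,j}(x,y)\,T_{k,\ell}(x,y)=\delta_{i,k}\,\delta_{j,\ell}\,\Lambda(j;c_4,c_0;N)\,\Omega(i;c_1,c_2,c_3;N-j). \]
   Context: Notation: $(a)_n=a(a+1)\cdots(a+n-1)$, $(a)_0=1$; $c_{ij}=c_i+c_j$, $c_{ijk}=c_i+c_j+c_k$. Parameters are assumed generic, so that no denominator below vanishes. For a non-negative integer $N$ and integers $0\le n,x\le N$ define \[ \Omega(n;c_1,c_2,c_3;N)=\binom{N}{n}(2n+c_{23}+1)\frac{(c_2+1)_n(N+2+c_{123})_n(c_1+1)_{N-n}}{(c_3+1)_n(c_{23}+n+1)_{N+1}}, \] \[ p_n(x;c_1,c_2,c_3;N)=\Omega(n;c_1,c_2,c_3;N)\,{}_4F_3\!\left(\begin{matrix}-n,\ n+c_{23}+1,\ -x,\ x+c_{12}+1\\ c_2+1,\ N+2+c_{123},\ -N\end{matrix};1\right), \] (the ${}_4F_3$ series being the terminating sum over $0\le s\le\min(n,x)$), and \[ \Lambda(x;c_1,c_2;N)=(-1)^x\binom{N}{x}(2x+c_{12}+1)\frac{(c_2+1)_x}{(c_1+1)_x(x+c_{12}+1)_{N+1}}.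 \] With $c_0+c_1+c_2+c_3+c_4=-2N-3$, the Tratnik polynomials of Racah type are, for non-negative integers $i,j,x,y$ with $i+j\le N$, $x+y\le N$, \[ T_{i,j}(x,y)=T_{i,j}(x,y;c_1,c_2,c_3,c_4;N)=p_i(x;c_1,c_2,c_3;N-j)\,p_j(y;c_3,c_0,c_4;N-x). \] *)

(* Defs.v *)
From HB Require Import structures.
From mathcomp Require Import all_boot all_order all_algebra.
Set Implicit Arguments. Unset Strict Implicit. Unset Printing Implicit Defensive.
Import Order.TTheory GRing.Theory Num.Theory.
Local Open Scope ring_scope.

Definition poch {R : numFieldType} (a : R) (n : nat) : R :=
  \prod_(k < n) (a + k%:R).

(* Omega(n; c1,c2,c3; N).  For n > N, 'C(N,n) = 0 (and N - n truncates). *)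
Definition Omega {R : numFieldType} (n : nat) (c1 c2 c3 : R) (N : nat) : R :=
  'C(N, n)%:R * (2 * n%:R + c2 + c3 + 1) *
  (poch (c2 + 1) n * poch (N%:R + 2 + c1 + c2 + c3) n * poch (c1 + 1) (N - n)) /
  (poch (c3 + 1) n * poch (c2 + c3 + n%:R + 1) N.+1).

(* Terminating 4F3( -n, n+c23+1, -x, x+c12+1 ; c2+1, N+2+c123, -N ; 1 ),
   summed over 0 <= s <= min(n, x). *)
Definition F43 {R : numFieldType} (n x : nat) (c1 c2 c3 : R) (N : nat) : R :=
  \sum_(s < (minn n x).+1)
    (poch (- n%:R) s * poch (n%:R + c2 + c3 + 1) s *
     poch (- x%:R) s * poch (x%:R + c1 + c2 + 1) s) /
    (poch (c2 + 1) s * poch (N%:R + 2 + c1 + c2 + c3) s *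
     poch (- N%:R) s * (s`!)%:R).

Definition racah_p {R : numFieldType} (n x : nat) (c1 c2 c3 : R) (N : nat) : R :=
  Omega n c1 c2 c3 N * F43 n x c1 c2 c3 N.

Definition Lambda {R : numFieldType} (x : nat) (c1 c2 : R) (N : nat) : R :=
  (-1) ^+ x * 'C(N, x)%:R * (2 * x%:R + c1 + c2 + 1) * poch (c2 + 1) x /
  (poch (c1 + 1) x * poch (x%:R + c1 + c2 + 1) N.+1).

(* Tratnik polynomial T_{i,j}(x,y; c1,c2,c3,c4; N); c0 is the parameter
   determined by c0 + ... + c4 = -2N-3, passed explicitly. *)
Definition tratnik {R : numFieldType} (i j x y : nat) (c0 c1 c2 c3 c4 : R)
  (N : nat) : R :=
  racah_p i x c1 c2 c3 (N - j) * racah_p j y c3 c0 c4 (N - x).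

(* Genericity: every linear form that occurs (shifted) in a denominator of the
   formulas above is nonzero for all shifts m = 1, ..., 2N+1. *)
Definition generic {R : numFieldType} (c0 c1 c2 c3 c4 : R) (N : nat) : Prop :=
  forall m : nat, (1 <= m <= 2 * N + 1)%N ->
    c0 + m%:R != 0 /\ c1 + m%:R != 0 /\ c2 + m%:R != 0 /\ c3 + m%:R != 0 /\
    c4 + m%:R != 0 /\
    c0 + c3 + m%:R != 0 /\ c2 + c3 + m%:R != 0 /\ c0 + c4 + m%:R != 0 /\
    c1 + c2 + m%:R != 0 /\
    c1 + c2 + c3 + m%:R != 0 /\ c0 + c3 + c4 + m%:R != 0.

(* Main.v *)
Require Import Defs.
From HB Require Import structures.
From mathcomp Require Import all_boot all_order all_algebra.
From mathcomp Require Import ring lra zify.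
Import Order.TTheory GRing.Theory Num.Theory.
Local Open Scope ring_scope.

Module RacahAux.
Set Implicit Arguments. Unset Strict Implicit.

Ltac side1 := match goal with
 | H : is_true (?y != 0) |- is_true (?x != 0) =>
     rewrite (_ : x = y); [exact H | ring] end.
Ltac side := repeat (apply/andP; split); try assumption; try side1.

Section Poch.
Variable R : numFieldType.
Implicit Types a b : R.

Lemma poch0 a : poch a 0 = 1.
Proof. by rewrite /poch big_ord0. Qed.

Lemma pochS a n : poch a n.+1 = poch a n * (a + n%:R).
Proof. by rewrite /poch big_ord_recr. Qed.

Lemma pochSl a n : poch a n.+1 = a * poch (a + 1) n.
Proof.
rewrite /poch big_ord_recl /= addr0; congr (_ * _).
apply: eq_bigr => k _; rewrite /bump /= -addn1 natrD; ring.
Qed.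

Lemma pochD a m n : poch a (m + n) = poch a m * poch (a + m%:R) n.
Proof.
elim: n => [|n IH]; first by rewrite addn0 poch0 mulr1.
by rewrite addnS !pochS IH natrD addrA mulrA.
Qed.

Lemma poch_neq0 a n : (forall k, (k < n)%N -> a + k%:R != 0) -> poch a n != 0.
Proof.
move=> h; rewrite /poch; apply/prodf_neq0 => k _; exact: h.
Qed.

Lemma poch_negn (n s : nat) : (n < s)%N -> poch (- n%:R : R) s = 0.
Proof.
move=> hs; rewrite /poch (bigD1 (Ordinal hs)) //= addrC subrr mul0r //.
Qed.

Lemma poch1 a : poch a 1 = a.
Proof. by rewrite pochS poch0 mul1r addr0. Qed.

End Poch.

Section DiffEq.
Variable R : numFieldType.
Variables (a b c : R) (M : nat).

Definition phi (X : R) (s : nat) := poch (- X) s * poch (X + a + b + 1) s.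
Definition Bc (X : R) := (X + b + 1) * (X + M%:R + a + b + c + 2) * (X - M%:R) * (X + a + b + 1)
   / ((2 * X + a + b + 1) * (2 * X + a + b + 2)).
Definition Dc (X : R) := X * (X + a) * (X - c - M%:R - 1) * (X + a + b + M%:R + 1)
   / ((2 * X + a + b) * (2 * X + a + b + 1)).
Definition lam (s : nat) : R := s%:R * (s%:R + b + c + 1).
Definition nu (s : nat) : R :=
  - (s%:R * (s%:R + b) * (s%:R + M%:R + a + b + c + 1) * (s%:R - 1 - M%:R)).


Lemma perS (X : R) (s : nat) :
  2 * X + a + b + 1 != 0 ->
  (X = 0 \/ 2 * X + a + b != 0) -> (X = M%:R \/ 2 * X + a + b + 2 != 0) ->
  Bc X * (phi (X + 1) s - phi X s) - Dc X * (phi X s - phi (X - 1) s)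
  = lam s * phi X s + nu s * phi X s.-1.
Proof.
move=> h1 hD hB.
case: s => [|[|t]].
- rewrite /phi /lam /nu !poch0; ring.
- rewrite /phi /lam /nu /= !poch1 !poch0.
  case: hD => [eX|hD]; case: hB => [eM|hB]; rewrite /Bc /Dc.
  + have e0 : M%:R = 0 :> R by rewrite -eM eX.
    rewrite eX e0 subrr !(mulr0, mul0r); ring.
  + rewrite eX ?mulr0 ?add0r in h1 hB *. rewrite !(mulr0, mul0r). field; side.
  + rewrite eM in h1 hD *. rewrite subrr !(mulr0, mul0r). field; side.
  + field; side.
- rewrite /phi /lam /nu /=.
  set E1 := poch (- X + 1) t.
  set E2 := poch (X + a + b + 1 + 1) t.
  have p1 : poch (- X) t.+2 = - X * (E1 * (- X + 1 + t%:R)) by rewrite pochSl pochS.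
  have p2 : poch (X + a + b + 1) t.+2 = (X + a + b + 1) * (E2 * (X + a + b + 1 + 1 + t%:R))
    by rewrite pochSl pochS.
  have p3 : poch (- X) t.+1 = - X * E1 by rewrite pochSl.
  have p4 : poch (X + a + b + 1) t.+1 = (X + a + b + 1) * E2 by rewrite pochSl.
  have p5 : poch (- (X + 1)) t.+2 = - (X + 1) * ((- (X + 1) + 1) * E1).
    by rewrite pochSl pochSl /E1; congr (_ * (_ * poch _ _)); ring.
  have p6 : poch (X + 1 + a + b + 1) t.+2 = E2 * (X + a + b + 1 + 1 + t%:R)
       * (X + a + b + 1 + 1 + t%:R + 1).
    rewrite pochS pochS /E2 -addn1 natrD.
    have -> : X + 1 + a + b + 1 = X + a + b + 1 + 1 by ring.
    ring.
  have p7 : poch (- (X - 1)) t.+2 = E1 * (- X + 1 + t%:R) * (- X + 1 + t%:R + 1).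
    rewrite pochS pochS /E1 -addn1 natrD.
    have -> : - (X - 1) = - X + 1 by ring.
    ring.
  have p8 : poch (X - 1 + a + b + 1) t.+2 = (X + a + b) * ((X + a + b + 1) * E2).
    rewrite pochSl pochSl /E2.
    have -> : X - 1 + a + b + 1 = X + a + b by ring.
    by [].
  rewrite p1 p2 p3 p4 p5 p6 p7 p8 -[(t.+2)%:R]natr1 -[(t.+1)%:R]natr1 .
  case: hD => [eX|hD]; case: hB => [eM|hB]; rewrite /Bc /Dc.
  + have e0 : M%:R = 0 :> R by rewrite -eM eX.
    rewrite eX e0 subrr !(mulr0, mul0r); ring.
  + rewrite eX ?mulr0 ?add0r in h1 hB *. rewrite !(mulr0, mul0r). field; side.
  + rewrite eM in h1 hD *. rewrite subrr !(mulr0, mul0r). field; side.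
  + field; side.
Qed.
End DiffEq.


Section G.
Variable R : numFieldType.
Variables (a b c : R) (M : nat).

Definition gen1 := forall m : nat, (1 <= m <= 2 * M + 1)%N ->
  (a + m%:R != 0) /\ (b + m%:R != 0) /\ (c + m%:R != 0) /\ (a + b + m%:R != 0) /\
  (b + c + m%:R != 0) /\ (a + b + c + m%:R != 0).

Hypothesis hg : gen1.

Lemma gA m : (1 <= m <= 2 * M + 1)%N -> a + m%:R != 0.
Proof. by move=> /hg []. Qed.
Lemma gB m : (1 <= m <= 2 * M + 1)%N -> b + m%:R != 0.
Proof. by move=> /hg [] ? []. Qed.
Lemma gC m : (1 <= m <= 2 * M + 1)%N -> c + m%:R != 0.
Proof. by move=> /hg [] ? [] ? []. Qed.
Lemma gAB m : (1 <= m <= 2 * M + 1)%N -> a + b + m%:R != 0.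
Proof. by move=> /hg [] ? [] ? [] ? []. Qed.
Lemma gBC m : (1 <= m <= 2 * M + 1)%N -> b + c + m%:R != 0.
Proof. by move=> /hg [] ? [] ? [] ? [] ? []. Qed.
Lemma gABC m : (1 <= m <= 2 * M + 1)%N -> a + b + c + m%:R != 0.
Proof. by move=> /hg [] ? [] ? [] ? [] ? []. Qed.

Definition Acoef (n s : nat) : R :=
  poch (- n%:R) s * poch (n%:R + b + c + 1) s /
  (poch (b + 1) s * poch (M%:R + 2 + a + b + c) s * poch (- M%:R) s * (s`!)%:R).

Lemma phi_ge (x s : nat) : (x < s)%N -> phi a b x%:R s = 0.
Proof. by move=> h; rewrite /phi poch_negn // mul0r. Qed.

Lemma Acoef_ge (n s : nat) : (n < s)%N -> Acoef n s = 0.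
Proof. by move=> h; rewrite /Acoef poch_negn // !mul0r. Qed.

Lemma F43_sum n x : F43 n x a b c M = \sum_(s < n.+1) Acoef n s * phi a b x%:R s.
Proof.
have e : forall s, (poch (- n%:R) s * poch (n%:R + b + c + 1) s *
     poch (- x%:R) s * poch (x%:R + a + b + 1) s) /
    (poch (b + 1) s * poch (M%:R + 2 + a + b + c) s *
     poch (- M%:R) s * (s`!)%:R) = Acoef n s * phi a b x%:R s.
  by move=> s; rewrite /Acoef /phi; ring.
rewrite /F43.
have hm : (minn n x < n.+1)%N by rewrite ltnS geq_minl.
transitivity (\sum_(s < (minn n x).+1) Acoef n s * phi a b x%:R s).
  by apply: eq_bigr => s _; exact: e.
rewrite (big_ord_widen n.+1 (fun s : nat => Acoef n s * phi a b x%:R s) hm) big_mkcond /=.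
apply: eq_bigr => s _; case: ifP => // /negbT; rewrite -leqNgt => h.
have hs : (s <= n)%N by rewrite -ltnS.
rewrite phi_ge ?mulr0 //.
move: h hs; lia.
Qed.

Lemma neq0E (x y : R) : y = x -> y != 0 -> x != 0.
Proof. by move=> ->. Qed.

Ltac nz3 lem m := apply: (neq0E _ (lem m _)); [rewrite ?natrD ?natrM; ring | lia].

Lemma natm_neq0 (m : nat) : (0 < m)%N -> (m%:R : R) != 0.
Proof. by rewrite pnatr_eq0 -lt0n. Qed.

Lemma negM_neq0 (s : nat) : (s < M)%N -> - M%:R + s%:R != 0 :> R.
Proof.
move=> h; have -> : - M%:R + s%:R = - ((M - s)%:R : R) by rewrite natrB ?(ltnW h) //; ring.
by rewrite oppr_eq0 natm_neq0 // subn_gt0.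
Qed.

Lemma Arat n s : (s < n)%N -> (n <= M)%N ->
  Acoef n s.+1 * nu a b c M s.+1 = (lam b c n - lam b c s) * Acoef n s.
Proof.
move=> hs hn.
have hsM : (s < M)%N by apply: leq_trans hn.
have p1 : poch (b + 1) s != 0.
  by apply: (@poch_neq0 R _ s) => k hk; nz3 gB k.+1.
have p2 : poch (M%:R + 2 + a + b + c) s != 0.
  by apply: (@poch_neq0 R _ s) => k hk; nz3 gABC (M + 2 + k)%N.
have p3 : poch (- M%:R : R) s != 0.
  apply: (@poch_neq0 R _ s) => k hk; apply: negM_neq0; lia.
have p4 : (s`!)%:R != 0 :> R by rewrite natm_neq0 // fact_gt0.
have q1 : b + 1 + s%:R != 0 by nz3 gB s.+1.
have q2 : M%:R + 2 + a + b + c + s%:R != 0 by nz3 gABC (M + 2 + s)%N.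
have q3 : - M%:R + s%:R != 0 :> R by apply: negM_neq0.
have q4 : (s%:R + 1) != 0 :> R by rewrite natr1 natm_neq0.
rewrite /Acoef /nu /lam !pochS factS natrM -natr1.
by field; side.
Qed.


Lemma DE n x : (n <= M)%N -> (x <= M)%N ->
  Bc a b c M x%:R * (F43 n x.+1 a b c M - F43 n x a b c M)
  - Dc a b c M x%:R * (F43 n x a b c M - F43 n x.-1 a b c M)
  = lam b c n * F43 n x a b c M.
Proof.
move=> hn hx.
have hS : forall s, Bc a b c M x%:R * (phi a b x.+1%:R s - phi a b x%:R s)
    - Dc a b c M x%:R * (phi a b x%:R s - phi a b x.-1%:R s)
    = lam b c s * phi a b x%:R s + nu a b c M s * phi a b x%:R s.-1.
  move=> s.
  have eD : Dc a b c M x%:R * (phi a b x%:R s - phi a b x.-1%:R s)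
      = Dc a b c M x%:R * (phi a b x%:R s - phi a b (x%:R - 1) s).
    case: x hx => [|x'] hx'; first by rewrite /Dc !mul0r.
    by rewrite /= -natr1 addrK.
  rewrite eD -natr1; apply: perS.
  - nz3 gAB (2 * x + 1)%N.
  - case: x hx {eD} => [|x'] hx'; [left => //| right; nz3 gAB (2 * x'.+1)%N].
  - case: (ltnP x M) => hxM.
    + right; nz3 gAB (2 * x + 2)%N.
    + by left; have -> : x = M by apply/eqP; rewrite eqn_leq hx hxM.
have key : \sum_(s < n.+1) Acoef n s * (lam b c s * phi a b x%:R s + nu a b c M s * phi a b x%:R s.-1)
   = lam b c n * \sum_(s < n.+1) Acoef n s * phi a b x%:R s.
  under eq_bigr do rewrite mulrDr.
  rewrite big_split /= big_ord_recr /= [X in _ + X = _]big_ord_recl /=.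
  rewrite [in RHS]big_ord_recr /= mulrDr.
  have nu0 : nu a b c M 0 = 0 by rewrite /nu !mul0r oppr0.
  rewrite nu0 mul0r mulr0 add0r.
  under [X in _ + X = _]eq_bigr => i _ do
    rewrite /bump /= add1n add0n mulrA (Arat (ltn_ord i) hn).
  rewrite addrAC -big_split /= mulr_sumr.
  congr (_ + _); last by ring.
  by apply: eq_bigr => i _; ring.
rewrite !F43_sum -key -!sumrB !mulr_sumr -sumrB; apply: eq_bigr => s _; rewrite -hS; ring.
Qed.
End G.


Lemma sbp (R : numFieldType) (M : nat) (W B D f g : nat -> R) :
  (forall x, (x < M)%N -> W x * B x = W x.+1 * D x.+1) -> B M = 0 -> D 0%N = 0 ->
  \sum_(x < M.+1) W x * (B x * (f x.+1 - f x) - D x * (f x - f x.-1)) * g x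
  = - \sum_(x < M) W x * B x * (f x.+1 - f x) * (g x.+1 - g x).
Proof.
move=> hWB hBM hD0.
have -> : \sum_(x < M.+1) W x * (B x * (f x.+1 - f x) - D x * (f x - f x.-1)) * g x
  = \sum_(x < M.+1) W x * B x * (f x.+1 - f x) * g x
    - \sum_(x < M.+1) W x * D x * (f x - f x.-1) * g x.
  by rewrite -sumrB; apply: eq_bigr => x _; ring.
rewrite big_ord_recr /= hBM mulr0 !mul0r addr0.
rewrite big_ord_recl /= hD0 mulr0 !mul0r add0r.
rewrite -sumrB -sumrN; apply: eq_bigr => x _.
rewrite /bump /= add1n -(hWB x (ltn_ord x)); ring.
Qed.

Section Orth.
Variable R : numFieldType.
Variables (a b c : R) (M : nat).
Hypothesis hg : gen1 a b c M.

Ltac nz4 lem m := apply: (neq0E _ (@lem _ _ _ _ _ hg m _)); [rewrite ?natrD ?natrM; ring | lia].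

Lemma SYM x : (x < M)%N ->
  Omega x c b a M * Bc a b c M x%:R = Omega x.+1 c b a M * Dc a b c M x.+1%:R.
Proof.
move=> hx.
have [k eM] : exists k, M = (x + k.+1)%N by exists (M - x.+1)%N; lia.
have pa : poch (a + 1) x != 0.
  by apply: (@poch_neq0 R _ x) => i hi; nz4 gA i.+1.
have pb : poch (b + a + x%:R + 1 + 1) M != 0.
  by apply: (@poch_neq0 R _ M) => i hi; nz4 gAB (x + i + 2)%N.
have hbin : ('C(M, x.+1) * x.+1 = 'C(M, x) * (M - x))%N.
  by rewrite mulnC mul_bin_left mulnC.
have hx1 : (x.+1%:R : R) != 0 by rewrite pnatr_eq0.
have hbinR : ('C(M, x.+1))%:R = ('C(M, x))%:R * (M - x)%:R / (x.+1)%:R :> R.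
  by rewrite -natrM -hbin natrM mulfK.
rewrite /Omega hbinR.
have e1 : (M - x)%N = k.+1 by lia.
have e2 : (M - x.+1)%N = k by lia.
rewrite e1 e2 (pochS (b + 1) x) (pochS (M%:R + 2 + c + b + a) x) (pochS (c + 1) k)
  (pochS (a + 1) x).
rewrite (pochSl (b + a + x%:R + 1)).
have -> : b + a + x.+1%:R + 1 = b + a + x%:R + 1 + 1 by rewrite -natr1; ring.
rewrite (pochS (b + a + x%:R + 1 + 1)) /Bc /Dc.
have -> : (x.+1%:R : R) = x%:R + 1 by rewrite -natr1.
have pb' : poch (b + a + x%:R + 1 + 1) (x + k.+1) != 0 by rewrite -eM.
have h1 : 2 * (x%:R + 1) + a + b + 1 != 0 by nz4 gAB (2 * x + 3)%N.
have h2 : 2 * (x%:R + 1) + a + b != 0 by nz4 gAB (2 * x + 2)%N.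
have h3 : b + a + x%:R + 1 + 1 + (x%:R + (1 + k%:R)) != 0 by nz4 gAB (x + x + k + 3)%N.
have h4 : a + 1 + x%:R != 0 by nz4 gA x.+1.
have h5 : x%:R + 1 != 0 :> R by rewrite natr1.
have h6 : 2 * x%:R + a + b + 1 != 0 by nz4 gAB (2 * x + 1)%N.
have h7 : b + a + x%:R + 1 != 0 by nz4 gAB x.+1.
rewrite eM natrD.
by field; side.
Qed.


Lemma OFF n m : (n <= M)%N -> (m <= M)%N -> n != m ->
  \sum_(x < M.+1) Omega x c b a M * F43 n x a b c M * F43 m x a b c M = 0.
Proof.
move=> hn hm hnm.
set W := fun x => Omega x c b a M.
set B := fun x : nat => Bc a b c M x%:R.
set D := fun x : nat => Dc a b c M x%:R.
set f := fun x => F43 n x a b c M.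
set g := fun x => F43 m x a b c M.
have hWB : forall x, (x < M)%N -> W x * B x = W x.+1 * D x.+1 by move=> x hx; exact: SYM.
have hBM : B M = 0 by rewrite /B /Bc subrr !(mulr0, mul0r).
have hD0 : D 0%N = 0 by rewrite /D /Dc !mul0r.
have e1 := sbp f g hWB hBM hD0.
have e2 := sbp g f hWB hBM hD0.
have q1 : \sum_(x < M.+1) W x * (B x * (f x.+1 - f x) - D x * (f x - f x.-1)) * g x
   = lam b c n * \sum_(x < M.+1) W x * f x * g x.
  rewrite mulr_sumr; apply: eq_bigr => x _.
  rewrite /B /D /f (DE hg hn (ltn_ord x) : _ = _); ring.
have q2 : \sum_(x < M.+1) W x * (B x * (g x.+1 - g x) - D x * (g x - g x.-1)) * f x
   = lam b c m * \sum_(x < M.+1) W x * f x * g x.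
  rewrite mulr_sumr; apply: eq_bigr => x _.
  rewrite /B /D /g (DE hg hm (ltn_ord x) : _ = _); ring.
have q3 : (lam b c n - lam b c m) * \sum_(x < M.+1) W x * f x * g x = 0.
  rewrite mulrBl -q1 -q2 e1 e2 opprK addrC -sumrB big1 // => x _; ring.
have hl : lam b c n - lam b c m != 0.
  have -> : lam b c n - lam b c m = (n%:R - m%:R) * (b + c + (n + m + 1)%:R).
    rewrite /lam !natrD; ring.
  rewrite mulf_neq0 //; last first.
    apply: (@gBC _ _ _ _ _ hg); move: hnm => /eqP hnm'; lia.
  by rewrite subr_eq0 eqr_nat.
by move/eqP: q3; rewrite mulf_eq0 (negbTE hl) /=; move/eqP.
Qed.

End Orth.


Section Dougall.
Variable R : numFieldType.
Variables (a b c : R) (L : nat).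
Hypothesis hg : gen1 a b c L.

Ltac nz5 lem m := apply: (neq0E _ (@lem _ _ _ _ _ hg m _)); [rewrite ?natrD ?natrM; ring | lia].

Definition FZ (M n : nat) : R := Omega n a b c M * poch (c + 1) M / poch (a + b + 2) M.
Definition GZ (M n : nat) : R :=
  - (n%:R * (n%:R + c) * (2 * M%:R + a + b + c + 3) * 'C(M.+1, n)%:R * poch (b + 1) n
     * poch (M%:R + 2 + a + b + c) n * poch (a + 1) (M.+1 - n) * poch (c + 1) M)
  / ((a + b + M%:R + 2) * (M%:R + 2 + a + b + c) * (M.+1)%:R * poch (c + 1) n
     * poch (b + c + n%:R + 1) M.+1 * poch (a + b + 2) M).

Lemma WZ1 M n : (M < L)%N -> (n <= M)%N -> FZ M.+1 n - FZ M n = GZ M n.+1 - GZ M n.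
Proof.
move=> hML hnM.
have [k eM] : exists k, M = (n + k)%N by exists (M - n)%N; lia.
have b1 : 'C(M.+1, n)%:R = 'C(M, n)%:R * (M.+1)%:R / (k.+1)%:R :> R.
  have h := mul_bin_down M.+1 n; rewrite /= in h.
  have e : (M.+1 - n)%N = k.+1 by lia.
  rewrite e in h.
  by rewrite -natrM mulnC h natrM mulrC mulKf // pnatr_eq0.
have b2 : 'C(M.+1, n.+1)%:R = 'C(M, n)%:R * (M.+1)%:R / (n.+1)%:R :> R.
  have h := mul_bin_diag M.+1 n; rewrite /= in h.
  by rewrite -natrM mulnC h natrM mulrC mulKf // pnatr_eq0.
have e1 : (M.+1 - n)%N = k.+1 by lia.
have e2 : (M - n)%N = k by lia.
have e3 : (M.+1 - n.+1)%N = k by lia.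
have q1 : poch ((M.+1)%:R + 2 + a + b + c) n
    = poch (M%:R + 2 + a + b + c) n * (M%:R + 2 + a + b + c + n%:R) / (M%:R + 2 + a + b + c).
  have h1 := pochSl (M%:R + 2 + a + b + c) n.
  rewrite pochS in h1.
  have -> : (M.+1)%:R + 2 + a + b + c = M%:R + 2 + a + b + c + 1 by rewrite -natr1; ring.
  rewrite h1; field; nz5 gABC (M + 2)%N.
have q2 : poch (b + c + n.+1%:R + 1) M.+1
    = poch (b + c + n%:R + 1) M.+1 * (b + c + n%:R + 1 + M.+1%:R) / (b + c + n%:R + 1).
  have h1 := pochSl (b + c + n%:R + 1) M.+1.
  rewrite pochS in h1.
  have -> : b + c + n.+1%:R + 1 = b + c + n%:R + 1 + 1 by rewrite -natr1; ring.
  rewrite h1; field; nz5 gBC n.+1.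
rewrite /FZ /GZ /Omega b1 b2 e1 e2 e3 q1 q2.
rewrite (pochS (a + 1) k) (pochS (b + c + n%:R + 1) M.+1) (pochS (c + 1) M)
  (pochS (a + b + 2) M) (pochS (b + 1) n) (pochS (M%:R + 2 + a + b + c) n) (pochS (c + 1) n).
have p1 : poch (a + b + 2) M != 0.
  by apply: (@poch_neq0 R _ M) => i hi; nz5 gAB (i + 2)%N.
have p2 : poch (b + c + n%:R + 1) M.+1 != 0.
  by apply: (@poch_neq0 R _ M.+1) => i hi; nz5 gBC (n + i + 1)%N.
have p3 : poch (c + 1) n != 0.
  by apply: (@poch_neq0 R _ n) => i hi; nz5 gC (i + 1)%N.
have h1 : M%:R + 1 != 0 :> R by rewrite natr1 pnatr_eq0.
have h2 : M%:R + 2 + a + b + c != 0 by nz5 gABC (M + 2)%N.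
have h3 : a + b + M%:R + 2 != 0 by nz5 gAB (M + 2)%N.
have h4 : k%:R + 1 != 0 :> R by rewrite natr1 pnatr_eq0.
have h5 : b + c + n%:R + 1 != 0 by nz5 gBC (n + 1)%N.
have h6 : b + c + n%:R + 1 + (M%:R + 1) != 0 by nz5 gBC (n + M + 2)%N.
have h7 : c + 1 + n%:R != 0 by nz5 gC (n + 1)%N.
have h8 : n%:R + 1 != 0 :> R by rewrite natr1 pnatr_eq0.
rewrite -[M.+1%:R]natr1 -[k.+1%:R]natr1 -[n.+1%:R]natr1.
rewrite eM !natrD in p1 p2 h1 h2 h3 h6 *.
by field; side.
Qed.


Lemma WZ2 M : (M < L)%N -> FZ M.+1 M.+1 - FZ M M.+1 = GZ M M.+2 - GZ M M.+1.
Proof.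
move=> hML.
have z1 : FZ M M.+1 = 0 by rewrite /FZ /Omega bin_small // !mul0r.
have z2 : GZ M M.+2 = 0 by rewrite /GZ bin_small // !(mulr0, mul0r) oppr0 mul0r.
rewrite z1 z2 subr0 sub0r.
have q1 : poch ((M.+1)%:R + 2 + a + b + c) M.+1
    = poch (M%:R + 2 + a + b + c) M.+1 * (M%:R + 2 + a + b + c + M.+1%:R) / (M%:R + 2 + a + b + c).
  have h1 := pochSl (M%:R + 2 + a + b + c) M.+1.
  rewrite pochS in h1.
  have -> : (M.+1)%:R + 2 + a + b + c = M%:R + 2 + a + b + c + 1 by rewrite -natr1; ring.
  rewrite h1; field; nz5 gABC (M + 2)%N.
have p1 : poch (a + b + 2) M != 0.
  by apply: (@poch_neq0 R _ M) => i hi; nz5 gAB (i + 2)%N.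
have p2 : poch (b + c + M.+1%:R + 1) M.+1 != 0.
  by apply: (@poch_neq0 R _ M.+1) => i hi; nz5 gBC (M + i + 2)%N.
have p3 : poch (c + 1) M != 0.
  by apply: (@poch_neq0 R _ M) => i hi; nz5 gC (i + 1)%N.
have h1 : M%:R + 1 != 0 :> R by rewrite natr1 pnatr_eq0.
have h2 : M%:R + 2 + a + b + c != 0 by nz5 gABC (M + 2)%N.
have h3 : a + b + M%:R + 2 != 0 by nz5 gAB (M + 2)%N.
have h5 : c + 1 + M%:R != 0 by nz5 gC (M + 1)%N.
have h6 : b + c + M%:R + 1 + 1 + (M%:R + 1) != 0 by nz5 gBC (M + M + 3)%N.
have h7 : 2 * (M%:R + 1) + b + c + 1 != 0 by nz5 gBC (M + M + 3)%N.
rewrite /FZ /GZ /Omega q1 subnn binn (pochS (b + c + M.+1%:R + 1) M.+1) (pochS (c + 1) M)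
  (pochS (a + b + 2) M) !poch0.
rewrite -[M.+1%:R]natr1 in p2 *.
by field; side.
Qed.


Lemma FZsum M : (M <= L)%N -> \sum_(n < M.+1) FZ M n = 1.
Proof.
elim: M => [|M IH] hM.
  rewrite big_ord1 /FZ /Omega bin0 !poch0 poch1.
  have h : b + c + 1 != 0 by nz5 gBC 1%N.
  have -> : ((ord0 : 'I_1) : nat) = 0%N by [].
  by rewrite !(mulr0, addr0, add0r, mul1r, mulr1, divr1) divff.
have hML : (M < L)%N by [].
have e : \sum_(n < M.+2) FZ M.+1 n
    = \sum_(n < M.+2) (FZ M n + (GZ M n.+1 - GZ M n)).
  apply: eq_bigr => n _; apply/eqP; rewrite addrC -subr_eq; apply/eqP.
  have := ltn_ord n; rewrite ltnS leq_eqVlt; case/orP => [/eqP ->|hn].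
    exact: WZ2.
  by apply: WZ1; rewrite -ltnS.
rewrite e big_split /= big_ord_recr /= IH ?(ltnW hML) //.
have -> : FZ M M.+1 = 0 by rewrite /FZ /Omega bin_small // !mul0r.
rewrite -(big_mkord xpredT (fun n => GZ M n.+1 - GZ M n)) telescope_sumr //.
have -> : GZ M M.+2 = 0 by rewrite /GZ bin_small // !(mulr0, mul0r) oppr0 mul0r.
have -> : GZ M 0 = 0 by rewrite /GZ !mul0r oppr0 mul0r.
by rewrite addr0 subrr addr0.
Qed.

Lemma OmegaSum : \sum_(n < L.+1) Omega n a b c L = poch (a + b + 2) L / poch (c + 1) L.
Proof.
have p1 : poch (a + b + 2) L != 0.
  by apply: (@poch_neq0 R _ L) => i hi; nz5 gAB (i + 2)%N.
have p3 : poch (c + 1) L != 0.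
  by apply: (@poch_neq0 R _ L) => i hi; nz5 gC (i + 1)%N.
have := FZsum (leqnn L); rewrite /FZ -mulr_suml -mulr_suml => h.
set S := \sum_(i < L.+1) Omega i a b c L in h *.
have -> : S = (S * poch (c + 1) L / poch (a + b + 2) L) * poch (a + b + 2) L / poch (c + 1) L.
  by field; side.
by rewrite h mul1r.
Qed.

End Dougall.


Lemma F43_dual (R : numFieldType) (a b c : R) M n x :
  F43 n x a b c M = F43 x n c b a M.
Proof.
rewrite /F43 minnC; apply: eq_bigr => s _.
have -> : (x%:R + b + a + 1) = (x%:R + a + b + 1) by ring.
have -> : (n%:R + c + b + 1) = (n%:R + b + c + 1) by ring.
have -> : (M%:R + 2 + c + b + a) = (M%:R + 2 + a + b + c) by ring.
ring.
Qed.

Lemma F43_0 (R : numFieldType) (a b c : R) M n : F43 n 0 a b c M = 1.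
Proof.
rewrite /F43 minn0 big_ord1.
have -> : ((ord0 : 'I_1) : nat) = 0%N by [].
by rewrite !poch0 !mulr1 divr1.
Qed.

Lemma F43_0l (R : numFieldType) (a b c : R) M x : F43 0 x a b c M = 1.
Proof. by rewrite F43_dual F43_0. Qed.

Lemma gen1_sym (R : numFieldType) (a b c : R) M : gen1 a b c M -> gen1 c b a M.
Proof.
move=> hg m hm; have [h1 [h2 [h3 [h4 [h5 h6]]]]] := hg m hm.
split; [exact h3|]. split; [exact h2|]. split; [exact h1|].
split; [by rewrite (addrC c b)|].
split; [by rewrite (addrC b a)|].
by rewrite (_ : c + b + a + m%:R = a + b + c + m%:R) //; ring.
Qed.

Section Orth2.
Variable R : numFieldType.
Variables (a b c : R) (M : nat).
Hypothesis hg : gen1 a b c M.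

Lemma ORTH n m : (n <= M)%N -> (m <= M)%N ->
  \sum_(x < M.+1) Omega x c b a M * F43 n x a b c M * F43 m x a b c M
  = (n == m)%:R / Omega n a b c M.
Proof.
move=> hn hm.
case: (eqVneq n m) => [<-|hnm]; last by rewrite (OFF hg hn hm hnm) mul0r.
rewrite mul1r.
set H := \sum_(x < M.+1) _.
set W := fun x => Omega x c b a M.
set F := fun m x => F43 m x a b c M.
set Z := \sum_(k < M.+1) \sum_(y < M.+1) F n y * W y * F k y * Omega k a b c M.
have Z1 : Z = H * Omega n a b c M.
  have e : forall k : 'I_M.+1, \sum_(y < M.+1) F n y * W y * F k y * Omega k a b c M
      = (\sum_(y < M.+1) W y * F n y * F k y) * Omega k a b c M.
    by move=> k; rewrite mulr_suml; apply: eq_bigr => y _; ring.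
  rewrite /Z (eq_bigr _ (fun k _ => e k)) (bigD1 (Ordinal (hn : (n < M.+1)%N))) //=.
  rewrite [X in _ + X]big1 ?addr0 // => k hk.
  rewrite (OFF hg hn (ltn_ord k)) ?mul0r //.
  by apply: contra hk => /eqP hk; apply/eqP/val_inj.
have Z2 : Z = 1.
  rewrite /Z exchange_big /=.
  have e : forall y : 'I_M.+1, \sum_(k < M.+1) F n y * W y * F k y * Omega k a b c M
      = F n y * W y * \sum_(k < M.+1) Omega k a b c M * F43 y k c b a M * F43 0 k c b a M.
    move=> y; rewrite mulr_sumr; apply: eq_bigr => k _.
    by rewrite /F -(F43_dual a b c M k y) -(F43_dual a b c M k 0) F43_0; ring.
  rewrite (eq_bigr _ (fun y _ => e y)) big_ord_recl [X in _ + X]big1 ?addr0; last first.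
    move=> y _; rewrite (OFF (gen1_sym hg) (n := lift ord0 y) _ (leq0n M)) ?mulr0 //.
    by rewrite /= /bump /= add1n ltn_ord.
  under eq_bigr => k _ do rewrite !F43_0l !mulr1.
  rewrite OmegaSum // /F F43_0 mul1r /W /Omega bin0 subn0 !poch0 (pochSl (b + a + 0%:R + 1)).
  have -> : b + a + 0%:R + 1 + 1 = a + b + 2 by ring.
  have p1 : poch (a + b + 2) M != 0.
    by apply: (@poch_neq0 R _ M) => i hi; apply: (neq0E _ (@gAB _ _ _ _ _ hg (i + 2)%N _));
      [rewrite ?natrD; ring | lia].
  have p3 : poch (c + 1) M != 0.
    by apply: (@poch_neq0 R _ M) => i hi; apply: (neq0E _ (@gC _ _ _ _ _ hg (i + 1)%N _));
      [rewrite ?natrD; ring | lia].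
  have h1 : b + a + 1 != 0.
    by apply: (neq0E _ (@gAB _ _ _ _ _ hg 1%N _)); [ring | lia].
  have -> : ((ord0 : 'I_M.+1) : nat) = 0%N by [].
  rewrite mulr0 add0r addr0.
  by field; side.
have hO : Omega n a b c M != 0.
  by apply/negP => /eqP h0; move: Z2; rewrite Z1 h0 mulr0 => /eqP; rewrite eq_sym oner_eq0.
have -> : H = H * Omega n a b c M / Omega n a b c M by rewrite mulfK.
by rewrite -Z1 Z2 div1r.
Qed.

End Orth2.


Lemma poch_neg (R : numFieldType) (y : R) j :
  poch (- y) j = (-1) ^+ j * poch (y - j%:R + 1) j.
Proof.
elim: j => [|j IH]; first by rewrite !poch0 expr0 mulr1.
rewrite pochS IH pochSl exprS.
have -> : y - j.+1%:R + 1 + 1 = y - j%:R + 1 by rewrite -natr1; ring.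
rewrite -natr1; ring.
Qed.

Lemma bin_fact_R (R : numFieldType) (n m : nat) : (m <= n)%N ->
  ('C(n, m))%:R = (n`!)%:R / ((m`!)%:R * ((n - m)`!)%:R) :> R.
Proof.
move=> h; rewrite -(bin_fact h) !natrM mulfK //.
by rewrite mulf_neq0 // pnatr_eq0 -lt0n fact_gt0.
Qed.

Lemma gen_nz (R : numFieldType) (N : nat) (c0 c1 c2 c3 c4 : R) :
  generic c0 c1 c2 c3 c4 N -> forall m : nat, (1 <= m <= 2 * N + 1)%N ->
    c0 + m%:R != 0 /\ c1 + m%:R != 0 /\ c2 + m%:R != 0 /\ c3 + m%:R != 0 /\
    c4 + m%:R != 0 /\
    c0 + c3 + m%:R != 0 /\ c2 + c3 + m%:R != 0 /\ c0 + c4 + m%:R != 0 /\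
    c1 + c2 + m%:R != 0 /\
    c1 + c2 + c3 + m%:R != 0 /\ c0 + c3 + c4 + m%:R != 0.
Proof. by []. Qed.

Section WI.
Variable R : numFieldType.
Variables (N : nat) (c0 c1 c2 c3 c4 : R).
Hypothesis hsum : c0 + c1 + c2 + c3 + c4 = - (2 * N + 3)%:R.
Hypothesis hgen : generic c0 c1 c2 c3 c4 N.

Lemma g_c1 m : (1 <= m <= 2 * N + 1)%N -> c1 + m%:R != 0.
Proof. by move=> /hgen; intuition. Qed.
Lemma g_c4 m : (1 <= m <= 2 * N + 1)%N -> c4 + m%:R != 0.
Proof. by move=> /hgen; intuition. Qed.
Lemma g_c12 m : (1 <= m <= 2 * N + 1)%N -> c1 + c2 + m%:R != 0.
Proof. by move=> /hgen; intuition. Qed.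
Lemma g_c04 m : (1 <= m <= 2 * N + 1)%N -> c0 + c4 + m%:R != 0.
Proof. by move=> /hgen; intuition. Qed.

Ltac nzg lem m := apply: (neq0E _ (@lem m _)); [rewrite ?natrD ?natrM; ring | lia].

Lemma WI x j : (x + j <= N)%N ->
  Lambda x c1 c2 N * Omega j c3 c0 c4 (N - x) = Lambda j c4 c0 N * Omega x c3 c2 c1 (N - j).
Proof.
move=> hxj.
have [r eN] : exists r, N = (x + j + r)%N by exists (N - x - j)%N; lia.
have eNR : N%:R = x%:R + j%:R + r%:R :> R by rewrite eN !natrD.
have hc0 : c0 = - (2 * N + 3)%:R - c1 - c2 - c3 - c4 by rewrite -hsum; ring.
have e1 : (N - x)%N = (j + r)%N by lia.
have e2 : (N - j)%N = (x + r)%N by lia.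
have e3 : (j + r - j)%N = r by lia.
have e4 : (x + r - x)%N = r by lia.
rewrite /Lambda /Omega e1 e2 e3 e4.
set Q1 := poch (x%:R + c1 + c2 + 1) (x + r).+1.
set Q2 := poch (c1 + c2 + (2 * x + r + 2)%:R) j.
set Q3 := poch (j%:R + c4 + c0 + 1) (j + r).+1.
set Q4 := poch (c0 + c4 + (2 * j + r + 2)%:R) x.
have A1 : poch ((j + r)%:R + 2 + c3 + c0 + c4) j = (-1) ^+ j * Q2.
  rewrite (_ : (j + r)%:R + 2 + c3 + c0 + c4 = - (c1 + c2 + (2 * x + j + r + 1)%:R)).
    by rewrite poch_neg /Q2; congr (_ * poch _ _); rewrite !natrD ?natrM; ring.
  by rewrite hc0 !natrD ?natrM eNR; ring.
have A2 : poch ((x + r)%:R + 2 + c3 + c2 + c1) x = (-1) ^+ x * Q4.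
  rewrite (_ : (x + r)%:R + 2 + c3 + c2 + c1 = - (c0 + c4 + (2 * j + x + r + 1)%:R)).
    by rewrite poch_neg /Q4; congr (_ * poch _ _); rewrite !natrD ?natrM; ring.
  by rewrite hc0 !natrD ?natrM eNR; ring.
have L1 : poch (x%:R + c1 + c2 + 1) N.+1 = Q1 * Q2.
  rewrite (_ : N.+1 = (x + r).+1 + j)%N; last by lia.
  rewrite pochD /Q1 /Q2; congr (_ * poch _ _); rewrite !natrD; ring.
have L2 : poch (j%:R + c4 + c0 + 1) N.+1 = Q3 * Q4.
  rewrite (_ : N.+1 = (j + r).+1 + x)%N; last by lia.
  rewrite pochD /Q3 /Q4; congr (_ * poch _ _); rewrite !natrD; ring.
have L3 : poch (c2 + c1 + x%:R + 1) (x + r).+1 = Q1 by rewrite /Q1; congr poch; ring.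
have L4 : poch (c0 + c4 + j%:R + 1) (j + r).+1 = Q3 by rewrite /Q3; congr poch; ring.
rewrite A1 A2 L1 L2 L3 L4.
rewrite (bin_fact_R _ (_ : x <= N)%N); last by lia.
rewrite (bin_fact_R _ (_ : j <= N)%N); last by lia.
rewrite (bin_fact_R _ (_ : j <= j + r)%N); last by lia.
rewrite (bin_fact_R _ (_ : x <= x + r)%N); last by lia.
rewrite e1 e2 e3 e4.
have f1 : forall n, (n`!)%:R != 0 :> R by move=> n; rewrite pnatr_eq0 -lt0n fact_gt0.
have q1 : Q1 != 0.
  by apply: (@poch_neq0 R _ _) => i hi; nzg g_c12 (x + 1 + i)%N.
have q2 : Q2 != 0.
  by apply: (@poch_neq0 R _ _) => i hi; nzg g_c12 (2 * x + r + 2 + i)%N.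
have q3 : Q3 != 0.
  by apply: (@poch_neq0 R _ _) => i hi; nzg g_c04 (j + 1 + i)%N.
have q4 : Q4 != 0.
  by apply: (@poch_neq0 R _ _) => i hi; nzg g_c04 (2 * j + r + 2 + i)%N.
have p1 : poch (c1 + 1) x != 0.
  by apply: (@poch_neq0 R _ _) => i hi; nzg g_c1 (i + 1)%N.
have p4 : poch (c4 + 1) j != 0.
  by apply: (@poch_neq0 R _ _) => i hi; nzg g_c4 (i + 1)%N.
have f2 := f1 x; have f3 := f1 j; have f4 := f1 r; have f5 := f1 (j + r)%N;
  have f6 := f1 (x + r)%N.
by field; side.
Qed.

End WI.

Lemma mulKdiv (R : numFieldType) (x : R) : x * x / x = x.
Proof. by case: (eqVneq x 0) => [->|h]; rewrite ?mul0r // mulfK. Qed.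

Lemma mulKdiv2 (R : numFieldType) (x y : R) : y * x * x / x = y * x.
Proof. by case: (eqVneq x 0) => [->|h]; rewrite ?(mulr0, mul0r, invr0) // mulfK. Qed.

Lemma Omega_big (R : numFieldType) n (c1 c2 c3 : R) N : (N < n)%N -> Omega n c1 c2 c3 N = 0.
Proof. by move=> h; rewrite /Omega bin_small // !mul0r. Qed.

Lemma sum_cond (R : numFieldType) (N x : nat) (g : nat -> R) : (x <= N)%N ->
  \sum_(y < N.+1 | (x + y <= N)%N) g y = \sum_(y < (N - x).+1) g y.
Proof.
move=> hx.
have h : ((N - x).+1 <= N.+1)%N by lia.
rewrite (big_ord_widen_cond _ (fun y => true) g h) /=.
by apply: eq_bigl => y; apply/idP/idP; lia.
Qed.

Lemma sum_trunc (R : numFieldType) (N K : nat) (f : nat -> R) : (K <= N)%N ->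
  (forall x, (K < x)%N -> (x <= N)%N -> f x = 0) ->
  \sum_(x < N.+1) f x = \sum_(x < K.+1) f x.
Proof.
move=> hK hf.
have h : (K.+1 <= N.+1)%N by [].
rewrite (big_ord_widen _ f h) [RHS]big_mkcond /=; apply: eq_bigr => x _.
case: ifP => // /negbT; rewrite -leqNgt => hx; apply: hf => //.
by rewrite -ltnS.
Qed.

Section Main.
Variable R : numFieldType.
Variables (N : nat) (c0 c1 c2 c3 c4 : R).
Hypothesis hsum : c0 + c1 + c2 + c3 + c4 = - (2 * N + 3)%:R.
Hypothesis hgen : generic c0 c1 c2 c3 c4 N.

Lemma gen_123 M : (M <= N)%N -> gen1 c1 c2 c3 M.
Proof.
move=> hM m hm; have := hgen (m := m); rewrite (_ : (1 <= m <= 2 * N + 1)%N); last by lia.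
by move/(_ isT); intuition.
Qed.

Lemma gen_304 M : (M <= N)%N -> gen1 c3 c0 c4 M.
Proof.
move=> hM m hm; have := hgen (m := m); rewrite (_ : (1 <= m <= 2 * N + 1)%N); last by lia.
move/(_ isT) => [h0 [h1 [h2 [h3 [h4 [h5 [h6 [h7 [h8 [h9 h10]]]]]]]]]].
split => //; split => //; split => //; split; first by rewrite (addrC c3).
split => //.
by rewrite (_ : c3 + c0 + c4 + m%:R = c0 + c3 + c4 + m%:R) //; ring.
Qed.

Lemma YSUM x j l : (x <= N)%N ->
  \sum_(y < (N - x).+1) Omega y c4 c0 c3 (N - x) * racah_p j y c3 c0 c4 (N - x)
     * racah_p l y c3 c0 c4 (N - x)
  = (j == l)%:R * Omega j c3 c0 c4 (N - x).
Proof.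
move=> hx.
set M := (N - x)%N.
have hg : gen1 c3 c0 c4 M by apply: gen_304; rewrite /M; lia.
rewrite /racah_p.
case: (ltnP M j) => hj.
  rewrite (Omega_big c3 c0 c4 hj) mulr0; apply: big1 => y _.
  by rewrite !(mul0r, mulr0).
case: (ltnP M l) => hl.
  have -> : (j == l)%:R * Omega j c3 c0 c4 M = 0.
    by case: eqP => [->|]; rewrite ?(Omega_big c3 c0 c4 hl) ?mulr0 ?mul0r.
  rewrite (Omega_big c3 c0 c4 hl); apply: big1 => y _.
  by rewrite !(mul0r, mulr0).
have -> : \sum_(y < M.+1) Omega y c4 c0 c3 M * (Omega j c3 c0 c4 M * F43 j y c3 c0 c4 M)
     * (Omega l c3 c0 c4 M * F43 l y c3 c0 c4 M)
   = Omega j c3 c0 c4 M * Omega l c3 c0 c4 M *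
     \sum_(y < M.+1) Omega y c4 c0 c3 M * F43 j y c3 c0 c4 M * F43 l y c3 c0 c4 M.
  by rewrite mulr_sumr; apply: eq_bigr => y _; ring.
rewrite (ORTH hg hj hl).
case: eqP => [<-|]; last by rewrite !mul0r mulr0.
by rewrite !mul1r mulKdiv.
Qed.


Lemma main_sec i j k l : (i + j <= N)%N -> (k + l <= N)%N ->
  \sum_(x < N.+1) \sum_(y < N.+1 | (x + y <= N)%N)
     Lambda x c1 c2 N * Omega y c4 c0 c3 (N - x) *
     tratnik i j x y c0 c1 c2 c3 c4 N * tratnik k l x y c0 c1 c2 c3 c4 N
  = (i == k)%:R * (j == l)%:R * Lambda j c4 c0 N * Omega i c1 c2 c3 (N - j).
Proof.
move=> hij hkl.
have step : forall x : 'I_N.+1,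
  \sum_(y < N.+1 | (x + y <= N)%N)
     Lambda x c1 c2 N * Omega y c4 c0 c3 (N - x) *
     tratnik i j x y c0 c1 c2 c3 c4 N * tratnik k l x y c0 c1 c2 c3 c4 N
  = Lambda x c1 c2 N * racah_p i x c1 c2 c3 (N - j) * racah_p k x c1 c2 c3 (N - l)
    * ((j == l)%:R * Omega j c3 c0 c4 (N - x)).
  move=> x; have hx : (x <= N)%N by rewrite -ltnS.
  rewrite (sum_cond (fun y => Lambda x c1 c2 N * Omega y c4 c0 c3 (N - x) *
     tratnik i j x y c0 c1 c2 c3 c4 N * tratnik k l x y c0 c1 c2 c3 c4 N) hx).
  rewrite -(YSUM j l hx) mulr_sumr; apply: eq_bigr => y _.
  rewrite /tratnik; ring.
rewrite (eq_bigr _ (fun x _ => step x)).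
case: eqP => [ejl|hjl]; last first.
  by rewrite mulr0 !mul0r; apply: big1 => x _; rewrite !(mul0r, mulr0).
subst l; rewrite mulr1.
have hjN : (j <= N)%N by lia.
under eq_bigr => x _ do rewrite mul1r.
rewrite (@sum_trunc _ N (N - j)%N (fun x => Lambda x c1 c2 N * racah_p i x c1 c2 c3 (N - j) *
     racah_p k x c1 c2 c3 (N - j) * Omega j c3 c0 c4 (N - x))); last 2 first.
- lia.
- move=> x hx hxN; rewrite (Omega_big c3 c0 c4 (_ : (N - x < j)%N)); last by lia.
  by rewrite !mulr0.
have hg : gen1 c1 c2 c3 (N - j) by apply: gen_123; lia.
have hi : (i <= N - j)%N by lia.
have hk : (k <= N - j)%N by lia.
have -> : \sum_(x < (N - j).+1)
   Lambda x c1 c2 N * racah_p i x c1 c2 c3 (N - j) * racah_p k x c1 c2 c3 (N - j) *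
      Omega j c3 c0 c4 (N - x)
  = Lambda j c4 c0 N * Omega i c1 c2 c3 (N - j) * Omega k c1 c2 c3 (N - j) *
    \sum_(x < (N - j).+1) Omega x c3 c2 c1 (N - j) * F43 i x c1 c2 c3 (N - j)
       * F43 k x c1 c2 c3 (N - j).
  rewrite mulr_sumr; apply: eq_bigr => x _.
  have hx : (x + j <= N)%N by have := ltn_ord x; lia.
  have := WI hsum hgen hx; rewrite /racah_p => hw.
  transitivity ((Lambda x c1 c2 N * Omega j c3 c0 c4 (N - x)) * Omega i c1 c2 c3 (N - j)
     * F43 i x c1 c2 c3 (N - j) * Omega k c1 c2 c3 (N - j) * F43 k x c1 c2 c3 (N - j)).
    by ring.
  by rewrite hw; ring.
rewrite (ORTH hg hi hk).
case: eqP => [<-|]; last by rewrite !mul0r mulr0.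
by rewrite !mul1r mulKdiv2.
Qed.

End Main.

End RacahAux.

Theorem mainTheorem1 (R : numFieldType) (N : nat) (c0 c1 c2 c3 c4 : R)
  (hsum : c0 + c1 + c2 + c3 + c4 = - (2 * N + 3)%:R)
  (hgen : generic c0 c1 c2 c3 c4 N)
  (i j k l : nat) (hij : (i + j <= N)%N) (hkl : (k + l <= N)%N) :
  \sum_(x < N.+1) \sum_(y < N.+1 | (x + y <= N)%N)
     Lambda x c1 c2 N * Omega y c4 c0 c3 (N - x) *
     tratnik i j x y c0 c1 c2 c3 c4 N * tratnik k l x y c0 c1 c2 c3 c4 N
  = (i == k)%:R * (j == l)%:R * Lambda j c4 c0 N * Omega i c1 c2 c3 (N - j).
Proof. exact: (RacahAux.main_sec hsum hgen hij hkl). Qed.
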